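(* A strongly semiconnected digraph is doubly stochasticable if and only if all of its strongly connected components are doubly stochasticable.
   Context: A digraph $G=(V,E)$, $V=\{v_1,\dots,v_n\}$, $E\subseteq V\times V$. $G$ is strongly semiconnected if, for all $v,w\in V$, a directed path from $v$ to $w$ implies one from $w$ to $v$. The strongly connected components are the maximal strongly connected subdigraphs. An adjacency matrix assigned to $G$ is $A\in\mathbb{R}^{n\times n}_{\geq0}$ with $a_{ij}>0$ iff $(v_i,v_j)\in E$; $G$ is doubly stochasticable if it admits an adjacency matrix whose row and column sums all equal $1$. *)

(* Defs.v *)
From HB Require Import structures.
From mathcomp Require Import all_boot all_order all_algebra.
From mathcomp Require Import reals.
Set Implicit Arguments. Unset Strict Implicit. Unset Printing Implicit Defensive.
Import Order.TTheory GRing.Theory Num.Theory.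
Local Open Scope ring_scope.

(* A digraph is G = (T, E) with T a finite vertex type and E : rel T the
   edge relation ((v,w) \in E  iff  E v w).  Directed paths = connect E. *)

Definition strongly_semiconnected (T : finType) (E : rel T) : Prop :=
  forall v w : T, connect E v w -> connect E w v.

Definition subdigraph (T : finType) (E : rel T) (S : {set T}) (F : rel T) : Prop :=
  forall x y, F x y -> [&& x \in S, y \in S & E x y].

Definition strongly_connected_sub (T : finType) (S : {set T}) (F : rel T) : Prop :=
  forall v w, v \in S -> w \in S -> connect F v w.

Definition is_scc (T : finType) (E : rel T) (S : {set T}) (F : rel T) : Prop :=
  [/\ S != set0, subdigraph E S F, strongly_connected_sub S F &
      forall (S' : {set T}) (F' : rel T),
        subdigraph E S' F' -> strongly_connected_sub S' F' ->
        S \subset S' -> (forall x y, F x y -> F' x y) ->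
        S' = S /\ (forall x y, F' x y = F x y)].

Definition ds_on (R : realType) (T : finType) (S : {set T}) (F : rel T) : Prop :=
  exists A : T -> T -> R,
    [/\ forall x y, x \in S -> y \in S -> 0 <= A x y,
        forall x y, x \in S -> y \in S -> (0 < A x y <-> F x y),
        forall x, x \in S -> \sum_(y in S) A x y = 1 &
        forall y, y \in S -> \sum_(x in S) A x y = 1].

Definition doubly_stochasticable (R : realType) (T : finType) (E : rel T) : Prop :=
  ds_on R [set: T] E.

(* Main.v *)
Require Import Defs.
From mathcomp Require Import all_boot all_order all_algebra reals.
From mathcomp Require Import boolp.
Set Implicit Arguments. Unset Strict Implicit. Unset Printing Implicit Defensive.
Import Order.TTheory GRing.Theory Num.Theory.
Local Open Scope ring_scope.

Section Aux.
Variables (T : finType) (E : rel T).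
Hypothesis ssc : strongly_semiconnected E.

Definition cls (x : T) : {set T} := [set z | connect E x z].
Definition Frel (S : {set T}) : rel T := [rel a b | [&& a \in S, b \in S & E a b]].

Lemma cls_closed x a b : a \in cls x -> E a b -> b \in cls x.
Proof.
rewrite !inE => xa ab; apply: connect_trans xa _; exact: connect1.
Qed.

Lemma cls_sym x a : a \in cls x -> x \in cls a.
Proof. by rewrite !inE => /ssc. Qed.

Lemma cls_eq x a : a \in cls x -> cls a = cls x.
Proof.
move=> xa; apply/setP => z; rewrite !inE; apply/idP/idP => H.
  by apply: connect_trans H; rewrite inE in xa.
by apply: connect_trans H; have := cls_sym xa; rewrite inE.
Qed.

Lemma lift_path x a p : a \in cls x -> path E a p ->
  connect (Frel (cls x)) a (last a p).
Proof.
elim: p a => [|c p IH] a ax /=; first by move=> _; exact: connect0.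
case/andP => ac pc.
have cx := cls_closed ax ac.
apply: connect_trans (IH c cx pc).
by apply: connect1; apply/and3P.
Qed.

Lemma lift_conn x a b : a \in cls x -> connect E a b -> connect (Frel (cls x)) a b.
Proof. by move=> ax /connectP [p pp ->]; exact: lift_path. Qed.

Lemma cls_sc x : strongly_connected_sub (cls x) (Frel (cls x)).
Proof.
move=> v w vx wx; have xv := cls_sym vx; rewrite inE in xv.
apply: (lift_conn vx); rewrite inE in wx.
exact: connect_trans xv wx.
Qed.

Lemma cls_sub x : subdigraph E (cls x) (Frel (cls x)).
Proof. by move=> a b. Qed.

Lemma conn_subE S F a b : subdigraph E S F -> connect F a b -> connect E a b.
Proof.
move=> sF; apply: connect_sub => u v /sF /and3P [_ _ uv]; exact: connect1.
Qed.

Lemma cls_scc x : is_scc E (cls x) (Frel (cls x)).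
Proof.
split.
- by apply/set0Pn; exists x; rewrite inE connect0.
- exact: cls_sub.
- exact: cls_sc.
move=> S' F' sF' scF' sub FF'.
have xS : x \in S' by apply: (subsetP sub); rewrite inE connect0.
have eS : S' = cls x.
  apply/eqP; rewrite eqEsubset sub andbT; apply/subsetP => y yS.
  rewrite inE; exact: conn_subE sF' (scF' _ _ xS yS).
split => // a b; apply/idP/idP; last exact: FF'.
by move=> /[dup] /sF' /and3P [aS bS ab] _; apply/and3P; rewrite -eS.
Qed.

Lemma scc_char S F x : is_scc E S F -> x \in S ->
  S = cls x /\ (forall a b, F a b = Frel (cls x) a b).
Proof.
case=> _ sF scF max xS.
have sub : S \subset cls x.
  apply/subsetP => s sS; rewrite inE; exact: conn_subE sF (scF _ _ xS sS).
have FF : forall a b, F a b -> Frel (cls x) a b.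
  move=> a b /sF /and3P [aS bS ab]; apply/and3P.
  by rewrite (subsetP sub _ aS) (subsetP sub _ bS).
have [e1 e2] := max _ _ (@cls_sub x) (@cls_sc x) sub FF.
by split => // a b; rewrite -e2.
Qed.

End Aux.

Theorem lemma3p1 (R : realType) (T : finType) (E : rel T) :
  strongly_semiconnected E ->
  (doubly_stochasticable R E <->
   forall (S : {set T}) (F : rel T), is_scc E S F -> ds_on R S F).
Proof.
move=> ssc; split.
- case=> A [A0 Apos Arow Acol] S F scc.
  have [x xS] : exists x, x \in S by case: scc => /set0Pn [x ?]; exists x.
  have [eS eF] := scc_char ssc scc xS.
  subst S.
  have Aout : forall a b, ~~ E a b -> A a b = 0.
    move=> a b nab; apply/eqP; rewrite eq_le A0 ?inE // andbT leNgt.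
    by apply/negP => /(Apos _ _ (in_setT _) (in_setT _)); apply/negP.
  exists A; split.
  + by move=> a b _ _; apply: A0; rewrite inE.
  + move=> a b ax bx; rewrite eF; have -> : Frel E (cls E x) a b = E a b by rewrite /Frel /= ax bx.
    by apply: Apos; rewrite inE.
  + move=> a ax; rewrite -(Arow a (in_setT _)).
    rewrite [RHS](bigID (fun y => y \in cls E x)) /=.
    rewrite [X in _ = _ + X]big1 ?addr0.
      by apply: eq_bigl => y; rewrite in_setT.
    move=> y /andP [_ yn]; apply: Aout; apply/negP => ay.
    by move: yn; rewrite (cls_closed ax ay).
  + move=> b bx; rewrite -(Acol b (in_setT _)).
    rewrite [RHS](bigID (fun y => y \in cls E x)) /=.
    rewrite [X in _ = _ + X]big1 ?addr0.
      by apply: eq_bigl => y; rewrite in_setT.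
    move=> a /andP [_ an]; apply: Aout; apply/negP => ab.
    move: an; rewrite -(cls_eq ssc bx) inE.
    by rewrite (ssc _ _ (connect1 ab)).
- move=> H.
  have H' : forall S : {set T}, exists A : T -> T -> R,
      is_scc E S (Frel E S) ->
      [/\ forall x y, x \in S -> y \in S -> 0 <= A x y,
        forall x y, x \in S -> y \in S -> (0 < A x y <-> Frel E S x y),
        forall x, x \in S -> \sum_(y in S) A x y = 1 &
        forall y, y \in S -> \sum_(x in S) A x y = 1].
    move=> S; case: (pselect (is_scc E S (Frel E S))) => h.
      by have [A HA] := H _ _ h; exists A.
    by exists (fun _ _ => 0).
  have [f Hf] := choice H'.
  pose A a b := if b \in cls E a then f (cls E a) a b else 0.
  have aa : forall a, a \in cls E a by move=> a; rewrite inE connect0.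
  have P a := Hf _ (@cls_scc _ _ ssc a).
  exists A; split.
  + move=> a b _ _; rewrite /A; case: ifP => // ba.
    by case: (P a) => h _ _ _; apply: h.
  + move=> a b _ _; rewrite /A; case: ifP => ba.
      by case: (P a) => _ h _ _; rewrite h // /Frel /= aa ba.
    rewrite ltxx; split => // ab; move: ba.
    by rewrite (cls_closed (aa a) ab).
  + move=> a _.
    transitivity (\sum_(y in cls E a) f (cls E a) a y); last first.
      by case: (P a) => _ _ h _; apply: h.
    rewrite [RHS]big_mkcond [LHS]big_mkcond /=; apply: eq_bigr => y _.
    by rewrite in_setT.
  + move=> b _.
    transitivity (\sum_(a in cls E b) f (cls E b) a b).
      rewrite [RHS]big_mkcond [LHS]big_mkcond /=; apply: eq_bigr => a _.
      rewrite in_setT.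
      rewrite /A; case: ifP => ba.
        by rewrite (cls_sym ssc ba) (cls_eq ssc ba).
      case: ifP => // ab; move: ba; by rewrite (cls_sym ssc ab).
    by case: (P b) => _ _ _ h; apply: h.
Qed.
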